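(* Let $n\ge 2$ be an even integer and consider the configuration of $n$ lighthouses with center point light sources described in the context. Then the total dark area is infinite: $D(n)=\infty$. More precisely, for the target lighthouse $L_0$, no ray emitted by any other lighthouse passes through the region directly behind $L_0$ (on the side of $L_0$ away from the placement center $P$) in a way that bounds it, so the dark region behind $L_0$ is unbounded and of infinite area.
   Context: Setup (''lighthouse problem with center point light sources''): fix an integer $n\ge 1$ and a point $P$ (the placement center). There are $n$ lighthouses $L_0,L_1,\dots,L_{n-1}$, each an opaque closed disk of radius $1$; the center of $L_k$ is at distance $n$ from $P$, at polar angle $2\pi k/n$ around $P$ (so $L_0$'s center $C$ lies $n$ units to the right of $P$, and the lighthouses are numbered counter-clockwise). The illumination angle is $\alpha=2\pi/n$. Each lighthouse has a single point light source at its center, emitting light along straight rays within the angular sector of total angle $\alpha$ symmetric about the direction from its center toward $P$ (for $n=1$ this means all directions). Light is blocked by the lighthouse disks. A point outside all disks is dark if no such ray reaches it. By symmetry every lighthouse has a congruent dark region behind it (on the side away from $P$); $d(n)$ denotes the area of the dark region behind one lighthouse and $D(n)=n\cdot d(n)$ is the total dark area. *)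

(* Defs.v *)
(* classical reals. Coordinates: placement center P = (0,0),
   L_0's center C = (n,0). *)
From Stdlib Require Import Reals Lra Lia.
Open Scope R_scope.

Definition pt : Type := (R * R)%type.

Definition center (n k : nat) : pt :=
  (INR n * cos (2 * PI * INR k / INR n), INR n * sin (2 * PI * INR k / INR n)).

Definition in_disk (c x : pt) : Prop :=
  (fst x - fst c) ^ 2 + (snd x - snd c) ^ 2 <= 1.

Definition alpha (n : nat) : R := 2 * PI / INR n.

(* x lies in the closed angular sector of total angle alpha emitted from the
   center of L_k, symmetric about the direction from that center toward P=(0,0):
   the angle between (x - c_k) and (P - c_k) is at most alpha/2. *)
Definition in_sector (n k : nat) (x : pt) : Prop :=
  let c := center n k in
  let dx := fst x - fst c in
  let dy := snd x - snd c in
  dx * (- fst c) + dy * (- snd c) >=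
    cos (alpha n / 2) * sqrt (dx ^ 2 + dy ^ 2) * sqrt (fst c ^ 2 + snd c ^ 2).

Definition seg (c x : pt) (s : R) : pt :=
  (fst c + s * (fst x - fst c), snd c + s * (snd x - snd c)).

Definition lit_by (n k : nat) (x : pt) : Prop :=
  in_sector n k x /\
  forall j : nat, (j < n)%nat -> j <> k ->
    forall s : R, 0 <= s <= 1 -> ~ in_disk (center n j) (seg (center n k) x s).

Definition lit (n : nat) (x : pt) : Prop :=
  exists k : nat, (k < n)%nat /\ lit_by n k x.

Definition dark (n : nat) (x : pt) : Prop :=
  (forall k : nat, (k < n)%nat -> ~ in_disk (center n k) x) /\ ~ lit n x.

(* "behind L_0": the open half-plane beyond the line through C perpendicular
   to PC, on the side away from P *)
Definition behind_L0 (n : nat) (x : pt) : Prop := INR n < fst x.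

(* Main.v *)
Require Import Defs.
From Stdlib Require Import Reals.
From Stdlib Require Import Lra Lia Psatz.
Open Scope R_scope.

Lemma cos2pi_minus x : cos (2*PI - x) = cos x.
Proof. rewrite cos_minus, cos_2PI, sin_2PI; ring. Qed.

Lemma sector_fail (n k : nat) (x y : R) :
  (0 < INR n) ->
  0 <= cos (alpha n / 2) ->
  let phi := 2 * PI * INR k / INR n in
  0 < x - INR n * cos phi ->
  Rabs (y - INR n * sin phi) < (x - INR n * cos phi) * (cos phi + cos (alpha n / 2)) ->
  ~ in_sector n k (x, y).
Proof.
  intros Hn HcA phi Hdx Hdy.
  unfold in_sector, center; cbv zeta; cbn [fst snd]. fold phi.
  set (cA := cos (alpha n / 2)) in *.
  set (dx := x - INR n * cos phi) in *.
  set (dy := y - INR n * sin phi) in *.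
  assert (Hc : sqrt ((INR n * cos phi) ^ 2 + (INR n * sin phi) ^ 2) = INR n).
  { replace ((INR n * cos phi) ^ 2 + (INR n * sin phi) ^ 2) with (INR n ^ 2)
      by (pose proof (sin2_cos2 phi); unfold Rsqr in *; nra).
    apply sqrt_pow2; lra. }
  rewrite Hc.
  assert (Hu : dx <= sqrt (dx ^ 2 + dy ^ 2)).
  { rewrite <- (sqrt_pow2 dx) at 1 by lra. apply sqrt_le_1_alt. nra. }
  assert (Hs : - dy * sin phi <= Rabs dy).
  { pose proof (SIN_bound phi).
    unfold Rabs; destruct (Rcase_abs dy); nra. }
  intro H. apply Rge_le in H.
  assert (cA * sqrt (dx ^ 2 + dy ^ 2) >= cA * dx) by nra.
  nra.
Qed.

Lemma cos_bound_k (m k : nat) : (1 <= m)%nat -> (k < 2*m)%nat -> k <> 0%nat -> k <> m ->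
  - cos (2 * PI / INR (2*m)) <= cos (2 * PI * INR k / INR (2*m)).
Proof.
  intros Hm Hk H0 Hkm.
  assert (HM : 1 <= INR m) by (apply (le_INR 1); lia).
  rewrite mult_INR. replace (INR 2) with 2 by (simpl; lra).
  replace (2 * PI / (2 * INR m)) with (PI / INR m) by (field; lra).
  replace (2 * PI * INR k / (2 * INR m)) with (PI / INR m * INR k) by (field; lra).
  rewrite <- Rtrigo_facts.cos_pi_minus.
  pose proof PI_RGT_0.
  set (t := PI / INR m).
  assert (Ht : PI = t * INR m) by (unfold t; field; lra).
  assert (Hp : 0 < t) by (unfold t; apply Rdiv_lt_0_compat; lra).
  rewrite Ht.
  assert (Hk0 : 1 <= INR k) by (apply (le_INR 1); lia).
  destruct (Nat.lt_ge_cases k m) as [Hlt|Hge].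
  - assert (Hk1 : INR k + 1 <= INR m) by (rewrite <- S_INR; apply le_INR; lia).
    apply cos_decr_1; nra.
  - assert (Hk1 : INR m + 1 <= INR k) by (rewrite <- S_INR; apply le_INR; lia).
    assert (Hk2 : INR k + 1 <= 2 * INR m) by (rewrite <- S_INR; replace (2 * INR m) with (INR (2*m)) by (rewrite mult_INR; reflexivity); apply le_INR; lia).
    rewrite <- (cos2pi_minus (t * INR k)). rewrite Ht.
    apply cos_decr_1; nra.
Qed.

Theorem mainTheorem1 (n : nat) (Hn : (2 <= n)%nat) (Heven : Nat.Even n) :
  forall M : R, exists a b c d : R,
    a <= b /\ c <= d /\ M <= (b - a) * (d - c) /\
    forall x y : R, a <= x <= b -> c <= y <= d ->
      behind_L0 n (x, y) /\ dark n (x, y).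
Proof.
  intro M.
  destruct Heven as [m Hm].
  assert (Hm1 : (1 <= m)%nat) by lia.
  assert (HM : 1 <= INR m) by (apply (le_INR 1); lia).
  assert (HnR : INR n = 2 * INR m) by (rewrite Hm, mult_INR; simpl; lra).
  pose proof PI_RGT_0.
  assert (Ha : alpha n / 2 = PI / INR n) by (unfold alpha; field; lra).
  set (cA := cos (alpha n / 2)).
  assert (HPn : 0 < PI / INR n) by (apply Rdiv_lt_0_compat; lra).
  assert (HPn2 : PI / INR n <= PI / 2).
  { rewrite HnR. apply Rmult_le_reg_r with (2 * INR m); [lra|].
    unfold Rdiv. rewrite Rmult_assoc, Rinv_l by lra. nra. }
  assert (HcA : 0 <= cA).
  { unfold cA; rewrite Ha. apply cos_ge_0; lra. }
  set (delta := cA - cos (2 * PI / INR n)).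
  assert (Hdel : 0 < delta).
  { unfold delta, cA. rewrite Ha.
    assert (cos (2 * PI / INR n) < cos (PI / INR n)); [|lra].
    replace (2 * PI / INR n) with (2 * (PI / INR n)) by (field; lra).
    apply cos_decreasing_1; lra. }
  set (X := INR n + 1 + (2 + INR n) / delta).
  assert (HX : (X - INR n) * delta = delta + 2 + INR n)
    by (unfold X; field; lra).
  assert (HX2 : INR n + 1 < X).
  { unfold X. assert (0 < (2 + INR n) / delta) by (apply Rdiv_lt_0_compat; lra). lra. }
  exists X, (X + Rabs M), 0, 1.
  split. { pose proof (Rabs_pos M); lra. }
  split. { lra. }
  split. { pose proof (Rle_abs M); lra. }
  intros x y Hx Hy.
  split. { unfold behind_L0; simpl; lra. }
  split.
  { intros k Hk. unfold in_disk, center; cbn [fst snd].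
    pose proof (COS_bound (2 * PI * INR k / INR n)).
    set (u := x - INR n * cos (2 * PI * INR k / INR n)).
    assert (INR n * cos (2 * PI * INR k / INR n) <= INR n * 1) by (apply Rmult_le_compat_l; lra).
    assert (1 < u) by (unfold u; lra).
    intro Hd. assert (0 <= (y - INR n * sin (2 * PI * INR k / INR n)) ^ 2) by apply pow2_ge_0.
    nra. }
  intros [k [Hk [Hsec Hblk]]].
  destruct (Nat.eq_dec k m) as [Hkm|Hkm].
  - subst k.
    assert (Hphi : 2 * PI * INR m / INR n = PI) by (rewrite HnR; field; lra).
    assert (Hphi0 : 2 * PI * INR 0 / INR n = 0) by (simpl; field; lra).
    apply (Hblk 0%nat) with (s := 2 * INR n / (x + INR n)); try lia.
    + split.
      * apply Rlt_le, Rdiv_lt_0_compat; lra.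
      * apply Rmult_le_reg_r with (x + INR n); [lra|].
        unfold Rdiv. rewrite Rmult_assoc, Rinv_l by lra. lra.
    + unfold in_disk, seg, center; cbn [fst snd].
      rewrite Hphi, Hphi0, cos_PI, sin_PI, cos_0, sin_0.
      assert (Hs : 2 * INR n / (x + INR n) * (x - INR n * -1) = 2 * INR n) by (field; lra).
      assert (Ht : 0 <= 2 * INR n / (x + INR n) * (y - INR n * 0) <= 1).
      { replace (2 * INR n / (x + INR n) * (y - INR n * 0)) with (2 * INR n * y / (x + INR n)) by (field; lra).
        split.
        - apply Rmult_le_pos; [nra|]. apply Rlt_le, Rinv_0_lt_compat; lra.
        - apply Rmult_le_reg_r with (x + INR n); [lra|].
          unfold Rdiv. rewrite Rmult_assoc, Rinv_l by lra. nra. }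
      nra.
  - assert (Hcos : - cos (2 * PI / INR n) <= cos (2 * PI * INR k / INR n)).
    { destruct (Nat.eq_dec k 0) as [->|Hk0].
      + replace (2 * PI * INR 0 / INR n) with 0 by (simpl; field; lra).
        rewrite cos_0. pose proof (COS_bound (2 * PI / INR n)). lra.
      + rewrite Hm. apply cos_bound_k; lia. }
    revert Hsec. apply sector_fail; [lra | exact HcA | |].
    + pose proof (COS_bound (2 * PI * INR k / INR n)). nra.
    + set (phi := 2 * PI * INR k / INR n) in *.
      pose proof (COS_bound phi). pose proof (SIN_bound phi).
      assert (Hy1 : Rabs (y - INR n * sin phi) <= 1 + INR n).
      { apply Rabs_le. nra. }
      fold cA.
      assert (Hprod : (x - INR n) * delta <= (x - INR n * cos phi) * (cos phi + cA)).
      { apply Rmult_le_compat; try lra. nra. unfold delta in *. lra. }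
      assert (X - INR n <= x - INR n) by lra.
      nra.
Qed.
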